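(* Let $\mathcal Q_{round}$ be the set of product measures $\mathrm{Prod}(q)$ with $q\in[0,1]^{\mathbb N}$ such that for every $n\in\mathbb N$, $q_{2n-1}\in\{\tfrac13,\tfrac23\}$ and $q_{2n}=\mathbb 1[q_{2n-1}=\tfrac23]$. Then $\mathcal Q_{round}$ is UME-learnable.
   Context: $\mathrm{Prod}(q)$ is the product measure on $\{0,1\}^{\mathbb N}$ with independent coordinates $X_j\sim\mathrm{Bernoulli}(q_j)$; its mean vector $\mathrm{Mean}(\mathrm{Prod}(q))$ is $q$. A collection $\mathcal Q$ of probability measures on $\{0,1\}^{\mathbb N}$ is UME-learnable if there exist (measurable) estimators $\mathcal A_n:(\{0,1\}^{\mathbb N})^n\to[0,1]^{\mathbb N}$ such that for every $\mu\in\mathcal Q$, $\mathbb E_{S\sim\mu^n}\|\mathcal A_n(S)-\mathrm{Mean}(\mu)\|_\infty\to0$ as $n\to\infty$, where $S$ consists of $n$ i.i.d. draws from $\mu$ and $\mathrm{Mean}(\mu)_j=\mathbb E[X_j]$. *)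

(* Defs.v *)
From HB Require Import structures.
From mathcomp Require Import all_boot all_order all_algebra.
From mathcomp Require Import all_classical all_reals all_analysis.
Set Implicit Arguments. Unset Strict Implicit. Unset Printing Implicit Defensive.
Import Order.TTheory GRing.Theory Num.Theory.
Import numFieldNormedType.Exports.
Local Open Scope classical_set_scope.
Local Open Scope ring_scope.

(** Coordinates are indexed by [nat] starting at 0: coordinate [k : nat]
    is the paper's coordinate [k+1]. *)

Definition cantor_gen : set (set (nat -> bool)) :=
  [set [set w | w j = true] | j in [set: nat]].

Definition Cantor : measurableType _ := g_sigma_algebraType cantor_gen.

Definition sample_gen (n : nat) : set (set ('I_n -> Cantor)) :=
  fun E => exists (i : 'I_n) (A : set Cantor),
    measurable A /\ E = [set S | A (S i)].

Definition Sample (n : nat) : measurableType _ :=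
  g_sigma_algebraType (@sample_gen n).

Section defs.
Variable R : realType.

(** [mu] is the product measure [Prod(q)]: it gives every finite cylinder
    its product-of-Bernoulli probability (this determines [mu] uniquely). *)
Definition is_Prod (q : nat -> R) (mu : probability Cantor R) : Prop :=
  forall (s : seq nat) (b : nat -> bool), uniq s ->
    mu [set w : Cantor | forall j, j \in s -> w j = b j] =
    (\prod_(j <- s) (if b j then q j else 1 - q j))%:E.

Definition Mean (mu : probability Cantor R) (j : nat) : R :=
  fine (\int[mu]_w ((w j : bool)%:R : R)%:E)%E.

(** [P] is the law of [n] i.i.d. draws from [mu], i.e. [P = mu^n]
    (rectangles get the product probability; this determines [P]). *)
Definition is_iid_law (n : nat) (mu : probability Cantor R)
    (P : probability (Sample n) R) : Prop :=
  forall A : 'I_n -> set Cantor, (forall i, measurable (A i)) ->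
    P [set S : Sample n | forall i, A i (S i)] = (\prod_i mu (A i))%E.

Definition sup_dist (x y : nat -> R) : \bar R :=
  ereal_sup [set (`|x j - y j|)%:E | j in [set: nat]].

Definition UME_learnable (Q : set (probability Cantor R)) : Prop :=
  exists A : forall n : nat, Sample n -> nat -> R,
    (forall n S j, 0 <= A n S j <= 1) /\
    (forall n j, measurable_fun [set: Sample n] (fun S => A n S j)) /\
    (forall mu, Q mu ->
       forall P : forall n : nat, probability (Sample n) R,
         (forall n, is_iid_law mu (P n)) ->
       ((fun n => (\int[P n]_S sup_dist (A n S) (Mean mu))%E) @ \oo --> 0%E)).

End defs.

(** The class [Q_round] (0-based indexing: the paper's pair
    [(q_{2n-1}, q_{2n})], [n >= 1], is [(q (2k), q (2k+1))], [k >= 0]). *)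
Definition Q_round (R : realType) : set (probability Cantor R) :=
  fun mu => exists q : nat -> R,
    (forall j, 0 <= q j <= 1) /\
    (forall k, (q k.*2 = 1/3 \/ q k.*2 = 2/3) /\
               q k.*2.+1 = (if q k.*2 == 2/3 then 1 else 0)) /\
    is_Prod q mu.

(* Main.v *)
Require Import Defs.
From HB Require Import structures.
From mathcomp Require Import all_boot all_order all_algebra.
From mathcomp Require Import all_classical all_reals all_analysis.
From mathcomp Require Import lra measurable_realfun.
Import Order.TTheory GRing.Theory Num.Theory.
Local Open Scope classical_set_scope.
Local Open Scope ring_scope.

Section proof.
Variable R : realType.

Definition est (w : nat -> bool) (j : nat) : R :=
  if odd j then (w j)%:R else (if w j.+1 then 2/3 else 1/3).

Definition estA (n : nat) : Sample n -> nat -> R :=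
  match n with 0 => fun _ _ => 0 | m.+1 => fun S j => est (S ord0) j end.

Lemma cantor_meas (c : nat) (P : bool -> Prop) :
  measurable [set w : Cantor | P (w c)].
Proof.
have E : measurable [set w : Cantor | w c = true].
  by apply: sub_sigma_algebra; exists c.
have [Pt|Pt] := pselect (P true); have [Pf|Pf] := pselect (P false).
- rewrite (_ : [set w | _] = setT); first exact: measurableT.
  by apply/seteqP; split => w //= _; case: (w c).
- rewrite (_ : [set w | _] = [set w : Cantor | w c = true]) //.
  by apply/seteqP; split => w /=; case: (w c).
- rewrite (_ : [set w | _] = ~` [set w : Cantor | w c = true]); first exact: measurableC.
  by apply/seteqP; split => w /=; case: (w c).
- rewrite (_ : [set w | _] = set0); first exact: measurable0.
  by apply/seteqP; split => w /=; case: (w c).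
Qed.

Lemma sample_meas n (i : 'I_n) (c : nat) (P : bool -> Prop) :
  measurable [set S : Sample n | P (S i c)].
Proof.
apply: sub_sigma_algebra; exists i, [set w : Cantor | P (w c)].
by split => //; exact: cantor_meas.
Qed.


Lemma nn_le_integral d (T : measurableType d) (mu : {measure set T -> \bar R})
  (f g : T -> \bar R) : (forall x, (0 <= f x)%E) -> (forall x, (f x <= g x)%E) ->
  (\int[mu]_x f x <= \int[mu]_x g x)%E.
Proof.
move=> f0 fg.
have g0 x : (0 <= g x)%E by apply: le_trans (fg x).
rewrite !ge0_integralTE//; apply: ereal_sup_le => _ [h /= hf <-].
by exists h => //= x; apply: le_trans (fg x).
Qed.

Lemma Mean_Prod (q : nat -> R) (mu : probability Cantor R) j :
  is_Prod q mu -> Mean mu j = q j.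
Proof.
move=> Pq; rewrite /Mean.
have mA : measurable [set w : Cantor | w j = true] by exact: (cantor_meas j (fun b => b = true)).
rewrite (eq_integral (fun w => (\1_[set w : Cantor | w j = true] w)%:E)); last first.
  move=> w _; rewrite /indic; case E: (w j).
    by rewrite mem_set.
  by rewrite memNset //= E.
rewrite integral_indic // setIT.
have -> : [set w : Cantor | w j = true] = [set w : Cantor | forall j0, j0 \in [:: j] -> w j0 = true].
  apply/seteqP; split => w /=.
    by move=> H j0; rewrite inE => /eqP ->.
  by move=> H; apply: H; rewrite inE.
have H := Pq [:: j] (fun _ => true) erefl; rewrite big_seq1 in H.
exact: (f_equal fine H).
Qed.

Lemma est_ok (q : nat -> R) (w : nat -> bool) j :
  (forall k, (q k.*2 = 1/3 \/ q k.*2 = 2/3) /\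
               q k.*2.+1 = (if q k.*2 == 2/3 then 1 else 0)) ->
  (forall k, (w k.*2.+1)%:R = q k.*2.+1) -> est w j = q j.
Proof.
move=> qp wq; rewrite /est.
have := odd_double_half j; case: (odd j) => /= <-.
  by rewrite add1n wq.
rewrite add0n; have [H1 H2] := qp j./2; have := wq j./2; rewrite H2.
case: (w _); case: ifP => [/eqP->|/negbT ne] //= h.
- by move/eqP: h; rewrite oner_eq0.
- by move/eqP: h; rewrite eq_sym oner_eq0.
- by case: H1 => // h'; rewrite h' eqxx in ne.
Qed.

Lemma null_N (q : nat -> R) (mu : probability Cantor R) n
  (P : probability (Sample n.+1) R) k :
  (forall k, q k.*2.+1 = (if q k.*2 == 2/3 then 1 else 0)) ->
  is_Prod q mu -> is_iid_law mu P ->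
  P [set S : Sample n.+1 | (S ord0 k.*2.+1)%:R != q k.*2.+1] = 0%E.
Proof.
move=> q2 Pq PP.
set m := k.*2.+1.
have [b qm] : exists b : bool, q m = b%:R.
  by exists (q m == 1); rewrite /m q2; case: ifP => _; rewrite ?eqxx // eq_sym oner_eq0.
pose Aset (i : 'I_n.+1) : set Cantor :=
  if i == ord0 then [set w : Cantor | w m = ~~ b] else setT.
have -> : [set S : Sample n.+1 | (S ord0 m)%:R != q m] =
          [set S : Sample n.+1 | forall i, Aset i (S i)].
  apply/seteqP; split => S /=.
    move=> h i; rewrite /Aset; case: eqP => [->|//] /=.
    by move: h; rewrite qm; case: (S ord0 m); case: (b) => //=; rewrite eqxx.
  by move=> /(_ ord0); rewrite /Aset eqxx /= qm => ->; case: (b) => /=; rewrite ?oner_eq0 // eq_sym oner_eq0.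
rewrite PP; last first.
  move=> i; rewrite /Aset; case: ifP => _; last exact: measurableT.
  exact: (cantor_meas m (fun x => x = ~~ b)).
rewrite (bigD1 ord0) //= /Aset eqxx.
have H := Pq [:: m] (fun _ => ~~ b) erefl; rewrite big_seq1 in H.
have -> : mu [set w : Cantor | w m = ~~ b] = 0%E.
  rewrite (_ : [set w : Cantor | w m = ~~ b] =
     [set w : Cantor | forall j0, j0 \in [:: m] -> w j0 = ~~ b]).
    rewrite H qm; case: (b) => /=; by rewrite ?subrr.
  apply/seteqP; split => w /=.
    by move=> h j0; rewrite inE => /eqP ->.
  by move=> h; apply: h; rewrite inE.
by rewrite mul0e.
Qed.

End proof.

Theorem mainTheorem9 (R : realType) : UME_learnable (@Q_round R).
Proof.
exists (@estA R); split; [|split].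
- case=> [|n] S j /=; first by rewrite lexx ler01.
  rewrite /est; case: odd; first by case: (S ord0 j); rewrite /= ?lexx ?ler01.
  by case: ifP => _; apply/andP; split; lra.
- case=> [|n] j /=; first exact: measurable_cst.
  move=> _ Y mY; rewrite setTI /est; case: (odd j).
  + have := @sample_meas n.+1 ord0 j (fun b : bool => Y (b%:R : R)).
    exact.
  + have := @sample_meas n.+1 ord0 j.+1 (fun b : bool => Y (if b then 2/3 else 1/3 : R)).
    exact.
- move=> mu [q [q01 [qp Pq]]] P PP.
  apply: cvg_near_cst; exists 1%N => //; case=> [//|n] _.
  have /negligible_bigcup : forall k, (P n.+1).-negligible
      [set S : Sample n.+1 | (S ord0 k.*2.+1)%:R != q k.*2.+1].
    move=> k; apply/negligibleP.
      have := @sample_meas n.+1 ord0 k.*2.+1 (fun b : bool => (b%:R : R) != q k.*2.+1).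
      exact.
    have q2 : forall k, q k.*2.+1 = (if q k.*2 == 2/3 then 1 else 0).
      by move=> k'; case: (qp k').
    have := @null_N R q mu n (P n.+1) k q2 Pq (PP n.+1); exact.
  case=> N [mN PN0 subN].
  have f0 : forall S : Sample n.+1, (0 <= sup_dist (estA R n.+1 S) (Mean mu))%E.
    move=> S; apply: (le_trans _ (ereal_sup_ubound _)); last by exists 0%N.
    by rewrite lee_fin.
  apply/eqP; rewrite eq_le; apply/andP; split; last exact: integral_ge0.
  have Ig : (\int[P n.+1]_S ((\1_N S)%:E * +oo))%E = 0%E.
    rewrite ge0_integralZr //.
    all: try by rewrite integral_indic // setIT PN0 mul0e.
    all: try by apply/measurable_EFinP; exact: measurable_indic.
    all: try by move=> S _; rewrite lee_fin.
  apply: (@le_trans _ _ (\int[P n.+1]_S ((\1_N S)%:E * +oo))%E); last by rewrite Ig.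
  apply: nn_le_integral f0 _.
  move=> S; have [NS|NS] := pselect (N S).
    by rewrite indicE mem_set // mul1e leey.
  rewrite indicE memNset // mul0e.
  apply: ge_ereal_sup => _ [j _ <-] /=.
  rewrite (@Mean_Prod R q mu j Pq) (@est_ok R q) ?subrr ?normr0 //.
  move=> k; apply/eqP; apply/negP => /negP h; apply: NS; apply: subN.
  by exists k.
Qed.
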